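(* Let $\mathcal{C}$ be a deflation-exact category and let $\mathcal{A}$ be a non-empty full subcategory satisfying axiom (A3). Consider a commutative diagram $$\begin{array}{ccccc} X&\rightarrowtail&Y&\twoheadrightarrow&Z\\ \downarrow&&\downarrow&&\downarrow\\ X'&\rightarrowtail&Y'&\twoheadrightarrow&Z'\end{array}$$ whose rows are conflations and whose vertical arrows are deflations. If $X'\in\mathcal{A}$, then the diagram can be completed to a commutative $3\times 3$ diagram $$\begin{array}{ccccc} X''&\rightarrowtail&Y''&\twoheadrightarrow&Z''\\ \downarrow&&\downarrow&&\downarrow\\ X&\rightarrowtail&Y&\twoheadrightarrow&Z\\ \downarrow&&\downarrow&&\downarrow\\ X'&\rightarrowtail&Y'&\twoheadrightarrow&Z'\end{array}$$ in which all rows and all columns are conflations (the upper vertical maps being inflations). Moreover, the upper left square is a pullback and the lower right square is a pushout.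
   Context: A conflation category is an additive category with a class of kernel-cokernel pairs (closed under isomorphisms) called conflations; first map an inflation ($\rightarrowtail$), second a deflation ($\twoheadrightarrow$). A deflation-exact category is a conflation category satisfying: (R0) $1_0$ is a deflation; (R1) composites of deflations are deflations; (R2) pullbacks of deflations along arbitrary morphisms exist and are deflations. Axiom (A3): if $a\colon C\rightarrowtail D$ is an inflation and $b\colon C\twoheadrightarrow A$ is a deflation with $A\in\mathcal{A}$, the pushout of $a$ along $b$ exists and yields a deflation $D\twoheadrightarrow P$ and an inflation $A\rightarrowtail P$. *)

(* Defs.v *)
From HB Require Import structures.
From mathcomp Require Import all_boot all_algebra.
Set Implicit Arguments. Unset Strict Implicit. Unset Printing Implicit Defensive.
Import GRing.Theory.
Local Open Scope ring_scope.

Record preadditive := Preadditive {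
  obj :> Type;
  cHom : obj -> obj -> zmodType;
  comp : forall X Y Z : obj, cHom Y Z -> cHom X Y -> cHom X Z;
  idm : forall X : obj, cHom X X;
  compA : forall (X Y Z W : obj) (h : cHom Z W) (g : cHom Y Z) (f : cHom X Y),
    comp h (comp g f) = comp (comp h g) f;
  comp1m : forall (X Y : obj) (f : cHom X Y), comp (idm Y) f = f;
  compm1 : forall (X Y : obj) (f : cHom X Y), comp f (idm X) = f;
  compDl : forall (X Y Z : obj) (g1 g2 : cHom Y Z) (f : cHom X Y),
    comp (g1 + g2) f = comp g1 f + comp g2 f;
  compDr : forall (X Y Z : obj) (g : cHom Y Z) (f1 f2 : cHom X Y),
    comp g (f1 + f2) = comp g f1 + comp g f2
}.

Arguments cHom {p} _ _.
Arguments comp {p X Y Z} _ _.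
Arguments idm {p} X.

Notation "g '∘' f" := (comp g f) (at level 40, left associativity).

Section Defs.
Variable C : preadditive.

Definition is_zero_obj (O : C) : Prop :=
  forall X : C, (forall f g : cHom O X, f = g) /\ (forall f g : cHom X O, f = g).

Definition is_biproduct (A B P : C) (i1 : cHom A P) (i2 : cHom B P)
  (p1 : cHom P A) (p2 : cHom P B) : Prop :=
  [/\ p1 ∘ i1 = idm A, p2 ∘ i2 = idm B, p1 ∘ i2 = 0, p2 ∘ i1 = 0
    & i1 ∘ p1 + i2 ∘ p2 = idm P].

Definition additive : Prop :=
  (exists O : C, is_zero_obj O) /\
  (forall A B : C, exists (P : C) (i1 : cHom A P) (i2 : cHom B P)
     (p1 : cHom P A) (p2 : cHom P B), is_biproduct i1 i2 p1 p2).

Definition is_iso (X Y : C) (u : cHom X Y) : Prop :=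
  exists v : cHom Y X, v ∘ u = idm X /\ u ∘ v = idm Y.

Definition is_kernel (X Y Z : C) (f : cHom X Y) (g : cHom Y Z) : Prop :=
  g ∘ f = 0 /\
  forall (T : C) (h : cHom T Y), g ∘ h = 0 ->
    exists u : cHom T X, f ∘ u = h /\ forall u' : cHom T X, f ∘ u' = h -> u' = u.

Definition is_cokernel (X Y Z : C) (f : cHom X Y) (g : cHom Y Z) : Prop :=
  g ∘ f = 0 /\
  forall (T : C) (h : cHom Y T), h ∘ f = 0 ->
    exists u : cHom Z T, u ∘ g = h /\ forall u' : cHom Z T, u' ∘ g = h -> u' = u.

Definition kernel_cokernel_pair (X Y Z : C) (f : cHom X Y) (g : cHom Y Z) : Prop :=
  is_kernel f g /\ is_cokernel f g.

Definition conf_class := forall X Y Z : C, cHom X Y -> cHom Y Z -> Prop.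

Variable conf : conf_class.

Definition inflation (X Y : C) (f : cHom X Y) : Prop :=
  exists (Z : C) (g : cHom Y Z), conf f g.
Definition deflation (Y Z : C) (g : cHom Y Z) : Prop :=
  exists (X : C) (f : cHom X Y), conf f g.

Definition is_pullback (A B W P : C) (f : cHom A W) (g : cHom B W)
  (p1 : cHom P A) (p2 : cHom P B) : Prop :=
  f ∘ p1 = g ∘ p2 /\
  forall (T : C) (t1 : cHom T A) (t2 : cHom T B), f ∘ t1 = g ∘ t2 ->
    exists u : cHom T P, (p1 ∘ u = t1 /\ p2 ∘ u = t2) /\
      forall u' : cHom T P, p1 ∘ u' = t1 -> p2 ∘ u' = t2 -> u' = u.

Definition is_pushout (W A B P : C) (f : cHom W A) (g : cHom W B)
  (q1 : cHom A P) (q2 : cHom B P) : Prop :=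
  q1 ∘ f = q2 ∘ g /\
  forall (T : C) (t1 : cHom A T) (t2 : cHom B T), t1 ∘ f = t2 ∘ g ->
    exists u : cHom P T, (u ∘ q1 = t1 /\ u ∘ q2 = t2) /\
      forall u' : cHom P T, u' ∘ q1 = t1 -> u' ∘ q2 = t2 -> u' = u.

Definition conflation_category : Prop :=
  [/\ additive,
      (forall (X Y Z : C) (f : cHom X Y) (g : cHom Y Z),
          conf f g -> kernel_cokernel_pair f g)
    & (forall (X Y Z X' Y' Z' : C) (f : cHom X Y) (g : cHom Y Z)
          (f' : cHom X' Y') (g' : cHom Y' Z')
          (a : cHom X X') (b : cHom Y Y') (c : cHom Z Z'),
          conf f g -> is_iso a -> is_iso b -> is_iso c ->
          b ∘ f = f' ∘ a -> c ∘ g = g' ∘ b -> conf f' g')].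

Definition axiom_R0 : Prop :=
  forall O : C, is_zero_obj O -> deflation (idm O).

Definition axiom_R1 : Prop :=
  forall (X Y Z : C) (f : cHom X Y) (g : cHom Y Z),
    deflation f -> deflation g -> deflation (g ∘ f).

Definition axiom_R2 : Prop :=
  forall (Y Z Z' : C) (d : cHom Y Z) (t : cHom Z' Z), deflation d ->
    exists (P : C) (p : cHom P Y) (d' : cHom P Z'),
      is_pullback d t p d' /\ deflation d'.

Definition deflation_exact : Prop :=
  [/\ conflation_category, axiom_R0, axiom_R1 & axiom_R2].

Definition axiom_A3 (inA : C -> Prop) : Prop :=
  forall (Cc D A : C) (a : cHom Cc D) (b : cHom Cc A),
    inflation a -> deflation b -> inA A ->
    exists (P : C) (b' : cHom D P) (a' : cHom A P),
      is_pushout a b b' a' /\ deflation b' /\ inflation a'.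

End Defs.

(* Main.v *)
Require Import Defs.
From mathcomp Require Import all_boot all_algebra.
Set Implicit Arguments. Unset Strict Implicit. Unset Printing Implicit Defensive.
Import GRing.Theory.
Local Open Scope ring_scope.

Section H.
Variable C : preadditive.
Variable conf : conf_class C.
Hypothesis Hkc : forall (X Y Z : C) (f : cHom X Y) (g : cHom Y Z),
  conf f g -> kernel_cokernel_pair f g.
Hypothesis Hiso : forall (X Y Z X' Y' Z' : C) (f : cHom X Y) (g : cHom Y Z)
          (f' : cHom X' Y') (g' : cHom Y' Z')
          (a : cHom X X') (b : cHom Y Y') (c : cHom Z Z'),
          conf f g -> is_iso a -> is_iso b -> is_iso c ->
          b ∘ f = f' ∘ a -> c ∘ g = g' ∘ b -> conf f' g'.
Hypothesis HR2 : axiom_R2 conf.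

Lemma comp0m (X Y Z : C) (f : cHom X Y) : (0 : cHom Y Z) ∘ f = 0.
Proof.
have H := compDl (0 : cHom Y Z) 0 f; rewrite addr0 in H.
by apply: (addrI ((0 : cHom Y Z) ∘ f)); rewrite addr0 -H.
Qed.

Lemma compm0 (X Y Z : C) (g : cHom Y Z) : g ∘ (0 : cHom X Y) = 0.
Proof.
have H := compDr g (0 : cHom X Y) 0; rewrite addr0 in H.
by apply: (addrI (g ∘ (0 : cHom X Y))); rewrite addr0 -H.
Qed.

Lemma compNl (X Y Z : C) (g : cHom Y Z) (f : cHom X Y) : (- g) ∘ f = - (g ∘ f).
Proof.
have H := compDl g (- g) f; rewrite subrr comp0m in H.
by apply: (addrI (g ∘ f)); rewrite -H subrr.
Qed.

Lemma compNr (X Y Z : C) (g : cHom Y Z) (f : cHom X Y) : g ∘ (- f) = - (g ∘ f).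
Proof.
have H := compDr g f (- f); rewrite subrr compm0 in H.
by apply: (addrI (g ∘ f)); rewrite -H subrr.
Qed.

Lemma conf_mono (X Y Z : C) (f : cHom X Y) (g : cHom Y Z) : conf f g ->
  forall (T : C) (u v : cHom T X), f ∘ u = f ∘ v -> u = v.
Proof.
move=> /Hkc [[gf0 Hk] _] T u v e.
have h0 : g ∘ (f ∘ u) = 0 by rewrite Defs.compA gf0 comp0m.
have [w [_ Hw]] := Hk T (f ∘ u) h0.
by rewrite (Hw u erefl) (Hw v (esym e)).
Qed.

Lemma conf_epi (X Y Z : C) (f : cHom X Y) (g : cHom Y Z) : conf f g ->
  forall (T : C) (u v : cHom Z T), u ∘ g = v ∘ g -> u = v.
Proof.
move=> /Hkc [_ [gf0 Hk]] T u v e.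
have h0 : (u ∘ g) ∘ f = 0 by rewrite -Defs.compA gf0 compm0.
have [w [_ Hw]] := Hk T (u ∘ g) h0.
by rewrite (Hw u erefl) (Hw v (esym e)).
Qed.

Lemma ker_fact (X Y Z : C) (f : cHom X Y) (g : cHom Y Z) : conf f g ->
  forall (T : C) (h : cHom T Y), g ∘ h = 0 -> exists u, f ∘ u = h.
Proof.
move=> /Hkc [[gf0 Hk] _] T h e.
by have [w [Hw _]] := Hk T h e; exists w.
Qed.

Lemma coker_fact (X Y Z : C) (f : cHom X Y) (g : cHom Y Z) : conf f g ->
  forall (T : C) (h : cHom Y T), h ∘ f = 0 -> exists u, u ∘ g = h.
Proof.
move=> /Hkc [_ [gf0 Hk]] T h e.
by have [w [Hw _]] := Hk T h e; exists w.
Qed.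

Lemma conf_comp0 (X Y Z : C) (f : cHom X Y) (g : cHom Y Z) : conf f g ->
  g ∘ f = 0.
Proof. by move=> /Hkc [[]]. Qed.

Lemma idm_iso (X : C) : is_iso (idm X).
Proof. by exists (idm X); rewrite comp1m. Qed.

Lemma defl_iso (A B Z : C) (d : cHom B Z) (u : cHom A B) (v : cHom B A) :
  deflation conf d -> v ∘ u = idm A -> u ∘ v = idm B -> deflation conf (d ∘ u).
Proof.
move=> [K [k Hk]] vu uv; exists K, (v ∘ k).
apply: (Hiso (a:=idm K) (b:=v) (c:=idm Z) Hk).
- exact: idm_iso.
- by exists u.
- exact: idm_iso.
- by rewrite compm1.
- by rewrite comp1m -Defs.compA uv compm1.
Qed.

Lemma pb_defl (Y Z Z' Q : C) (d : cHom Y Z) (t : cHom Z' Z) (p : cHom Q Y)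
  (d' : cHom Q Z') : deflation conf d -> is_pullback d t p d' -> deflation conf d'.
Proof.
move=> Hd [e Hpb].
have [P [p0 [d0 [[e0 Hpb0] Hd0]]]] := HR2 t Hd.
have [u [[pu du] _]] := Hpb0 Q p d' e.
have [v [[pv dv] _]] := Hpb P p0 d0 e0.
have [w [_ Hw]] := Hpb Q p d' e.
have [w' [_ Hw']] := Hpb0 P p0 d0 e0.
have vu : v ∘ u = idm Q.
  rewrite (Hw (v ∘ u)); last by rewrite Defs.compA dv.
  - by rewrite (Hw (idm Q)) // compm1.
  - by rewrite Defs.compA pv.
have uv : u ∘ v = idm P.
  rewrite (Hw' (u ∘ v)); last by rewrite Defs.compA du.
  - by rewrite (Hw' (idm P)) // compm1.
  - by rewrite Defs.compA pu.
by rewrite -du; apply: defl_iso Hd0 vu uv.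
Qed.

Lemma ker_conf (X Y Z : C) (f : cHom X Y) (g : cHom Y Z) :
  deflation conf g -> is_kernel f g -> conf f g.
Proof.
move=> [K [k Hk]] [gf0 Hker].
have gk0 := conf_comp0 Hk.
have [a ka] := ker_fact Hk gf0.
have [b [fb Hb]] := Hker K k gk0.
have ab : a ∘ b = idm K.
  by apply: (conf_mono Hk); rewrite Defs.compA ka fb compm1.
have ba : b ∘ a = idm X.
  have [w [_ Hw]] := Hker X f gf0.
  rewrite (Hw (b ∘ a)); last by rewrite Defs.compA fb ka.
  by rewrite (Hw (idm X)) // compm1.
apply: (Hiso (a:=b) (b:=idm Y) (c:=idm Z) Hk).
- by exists a.
- exact: idm_iso.
- exact: idm_iso.
- by rewrite comp1m fb.
- by rewrite comp1m compm1.
Qed.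

End H.

Unset Implicit Arguments.
Local Notation cA := Defs.compA.

Theorem mainTheorem6 (C : preadditive) (conf : conf_class C)
  (inA : C -> Prop)
  (HC : deflation_exact conf)
  (HAne : exists A0 : C, inA A0)
  (HA3 : axiom_A3 conf inA)
  (X Y Z X' Y' Z' : C)
  (f : cHom X Y) (g : cHom Y Z) (f' : cHom X' Y') (g' : cHom Y' Z')
  (alpha : cHom X X') (beta : cHom Y Y') (gamma : cHom Z Z')
  (Hrow1 : conf _ _ _ f g) (Hrow2 : conf _ _ _ f' g')
  (Halpha : deflation conf alpha) (Hbeta : deflation conf beta)
  (Hgamma : deflation conf gamma)
  (Hsq1 : beta ∘ f = f' ∘ alpha) (Hsq2 : gamma ∘ g = g' ∘ beta)
  (HX' : inA X') :
  exists (X'' Y'' Z'' : C) (f'' : cHom X'' Y'') (g'' : cHom Y'' Z'')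
         (alpha' : cHom X'' X) (beta' : cHom Y'' Y) (gamma' : cHom Z'' Z),
    conf _ _ _ f'' g'' /\
    conf _ _ _ alpha' alpha /\ conf _ _ _ beta' beta /\ conf _ _ _ gamma' gamma /\
    f ∘ alpha' = beta' ∘ f'' /\ g ∘ beta' = gamma' ∘ g'' /\
    is_pullback f beta' alpha' f'' /\
    is_pushout g beta gamma g'.
Proof.
case: HC => [[_ Hkc Hiso] _ HR1 HR2].
have [X'' [alpha' Ha]] := Halpha.
have [Y'' [beta' Hb]] := Hbeta.
have [Z'' [gamma' Hc]] := Hgamma.
have a0 := conf_comp0 Hkc Ha.
have b0 := conf_comp0 Hkc Hb.
have c0 := conf_comp0 Hkc Hc.
have f0 := conf_comp0 Hkc Hrow1.
have [f'' Hf''] : exists f'', beta' ∘ f'' = f ∘ alpha'.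
  apply: (ker_fact Hkc Hb). by rewrite cA Hsq1 -cA a0 compm0.
have [g'' Hg''] : exists g'', gamma' ∘ g'' = g ∘ beta'.
  apply: (ker_fact Hkc Hc). by rewrite cA Hsq2 -cA b0 compm0.
have Hgd : deflation conf g by exists X, f.
have [K [k Hk]] := HR1 _ _ _ g gamma Hgd Hgamma.
have k0 := conf_comp0 Hkc Hk.
have [i Hi] : exists i, k ∘ i = f.
  apply: (ker_fact Hkc Hk). by rewrite -cA f0 compm0.
have [e He] : exists e, gamma' ∘ e = g ∘ k.
  apply: (ker_fact Hkc Hc). by rewrite cA k0.
have [a Ha'] : exists a, f' ∘ a = beta ∘ k.
  apply: (ker_fact Hkc Hrow2). by rewrite cA -Hsq2 k0.
have [j Hj] : exists j, k ∘ j = beta'.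
  apply: (ker_fact Hkc Hk). by rewrite -cA -Hg'' cA c0 comp0m.
have epb : is_pullback g gamma' k e.
  split; first by rewrite He.
  move=> T t1 t2 et.
  have [u Hu] : exists u, k ∘ u = t1.
    apply: (ker_fact Hkc Hk). by rewrite -cA et cA c0 comp0m.
  exists u; split; [split=>//|].
    apply: (conf_mono Hkc Hc). by rewrite cA He -cA Hu et.
  move=> u' Hu' _. apply: (conf_mono Hkc Hk). by rewrite Hu Hu'.
have Hed : deflation conf e := pb_defl Hiso HR2 Hgd epb.
have Hie : conf _ _ _ i e.
  apply: (ker_conf Hkc Hiso Hed). split.
  - apply: (conf_mono Hkc Hc). by rewrite compm0 cA He -cA Hi f0.
  - move=> T h eh.
    have [x Hx] : exists x, f ∘ x = k ∘ h.
      apply: (ker_fact Hkc Hrow1). by rewrite cA -He -cA eh compm0.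
    exists x; split.
      apply: (conf_mono Hkc Hk). by rewrite cA Hi Hx.
    move=> u' Hu'. apply: (conf_mono Hkc Hrow1). by rewrite Hx -Hu' cA Hi.
have Hi_inf : inflation conf i by exists Z'', e.
have Hai : a ∘ i = alpha.
  apply: (conf_mono Hkc Hrow2). by rewrite cA Ha' -cA Hi Hsq1.
have [P [b' [a' [[pe Hpo] [Hdb' _]]]]] := HA3 _ _ _ i alpha Hi_inf Halpha HX'.
have [r [[rb ra] _]] := Hpo X' a (idm X') (ltac:(by rewrite Hai comp1m)).
have [s [[sb sa] _]] := Hpo Z'' e 0 (ltac:(by rewrite comp0m (conf_comp0 Hkc Hie))).
pose h := idm P - a' ∘ r.
have ha : h ∘ a' = 0.
  by rewrite /h compDl compNl comp1m -cA ra compm1 subrr.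
have [σ Hσ] : exists σ, σ ∘ e = h ∘ b'.
  apply: (coker_fact Hkc Hie). by rewrite -cA pe cA ha comp0m.
have σs : σ ∘ s = h.
  have [w [_ Hw]] := Hpo P (h ∘ b') (h ∘ a') (ltac:(by rewrite -cA pe cA)).
  rewrite (Hw h) //. apply: Hw.
    by rewrite -cA sb Hσ.
  by rewrite -cA sa compm0 ha.
have sepi : forall T (u v : cHom Z'' T), u ∘ s = v ∘ s -> u = v.
  move=> T u v uv. apply: (conf_epi Hkc Hie). by rewrite -sb !cA uv.
have sσ : s ∘ σ = idm Z''.
  apply: sepi. by rewrite -cA σs comp1m /h compDr compNr compm1 cA sa comp0m subr0.
have rσ : r ∘ σ = 0.
  apply: sepi. by rewrite -cA σs comp0m /h compDr compNr compm1 cA ra comp1m subrr.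
have dec : σ ∘ s + a' ∘ r = idm P by rewrite σs /h subrK.
have jm : forall T (x y : cHom T P), r ∘ x = r ∘ y -> s ∘ x = s ∘ y -> x = y.
  move=> T x y rx sx.
  have -> : x = (σ ∘ s + a' ∘ r) ∘ x by rewrite dec comp1m.
  have -> : y = (σ ∘ s + a' ∘ r) ∘ y by rewrite dec comp1m.
  by rewrite !compDl -!cA rx sx.
have aj : a ∘ j = 0.
  apply: (conf_mono Hkc Hrow2). by rewrite compm0 cA Ha' -cA Hj b0.
have ej : e ∘ j = g''.
  apply: (conf_mono Hkc Hc). by rewrite cA He -cA Hj Hg''.
have gpb : is_pullback b' σ j g''.
  split.
    apply: jm.
      by rewrite cA rb aj cA rσ comp0m.
    by rewrite cA sb ej cA sσ comp1m.
  move=> T t1 t2 et.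
  have at1 : a ∘ t1 = 0 by rewrite -rb -cA et cA rσ comp0m.
  have [v Hv] : exists v, beta' ∘ v = k ∘ t1.
    apply: (ker_fact Hkc Hb). by rewrite cA -Ha' -cA at1 compm0.
  have jv : j ∘ v = t1.
    apply: (conf_mono Hkc Hk). by rewrite cA Hj Hv.
  exists v; split; [split=>//|].
    by rewrite -ej -cA jv -sb -cA et cA sσ comp1m.
  move=> u' ju' _. apply: (conf_mono Hkc Hb). by rewrite Hv -Hj -cA ju'.
have Hgd'' : deflation conf g'' := pb_defl Hiso HR2 Hdb' gpb.
have Hconf'' : conf _ _ _ f'' g''.
  apply: (ker_conf Hkc Hiso Hgd''). split.
  - apply: (conf_mono Hkc Hc). by rewrite compm0 cA Hg'' -cA Hf'' cA f0 comp0m.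
  - move=> T h0 eh.
    have [x Hx] : exists x, f ∘ x = beta' ∘ h0.
      apply: (ker_fact Hkc Hrow1). by rewrite cA -Hg'' -cA eh compm0.
    have ax : alpha ∘ x = 0.
      apply: (conf_mono Hkc Hrow2). by rewrite compm0 cA -Hsq1 -cA Hx cA b0 comp0m.
    have [u Hu] := ker_fact Hkc Ha ax.
    exists u; split.
      apply: (conf_mono Hkc Hb). by rewrite cA Hf'' -cA Hu Hx.
    move=> u' Hu'. apply: (conf_mono Hkc Ha). rewrite Hu.
    apply: (conf_mono Hkc Hrow1). by rewrite Hx -Hu' !cA Hf''.
exists X'', Y'', Z'', f'', g'', alpha', beta', gamma'.
split; first exact Hconf''. split; first exact Ha. split; first exact Hb.
split; first exact Hc.
split; first by rewrite Hf''. split; first by rewrite Hg''.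
split.
- split; first by rewrite Hf''.
  move=> T t1 t2 et.
  have at1 : alpha ∘ t1 = 0.
    apply: (conf_mono Hkc Hrow2). by rewrite compm0 cA -Hsq1 -cA et cA b0 comp0m.
  have [u Hu] := ker_fact Hkc Ha at1.
  exists u; split; [split=>//|].
    apply: (conf_mono Hkc Hb). by rewrite cA Hf'' -cA Hu et.
  move=> u' Hu' _. apply: (conf_mono Hkc Ha). by rewrite Hu Hu'.
- split; first exact Hsq2.
  move=> T t1 t2 et.
  have t2f : t2 ∘ f' = 0.
    apply: (conf_epi Hkc Ha). by rewrite -cA -Hsq1 cA -et -cA f0 compm0 comp0m.
  have [u Hu] := coker_fact Hkc Hrow2 t2f.
  exists u; split; [split|].
  + apply: (conf_epi Hkc Hrow1). by rewrite -cA Hsq2 cA Hu et.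
  + exact Hu.
  + move=> u' _ Hu'. apply: (conf_epi Hkc Hrow2). by rewrite Hu Hu'.
Qed.
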